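(* Let $m,n\ge0$ and let $\mathit{TS}_i=(\mathcal{S}_i,\mathcal{E}_i,\mathcal{I}_i,\to_i)$, $1\le i\le m+n$, be LTSs. Let $\psi\subseteq\mathcal{E}_1^\omega\times\cdots\times\mathcal{E}_{m+n}^\omega$ be an $(m+n)$-ary safety relation. If $(\mathcal{I}_1,\ldots,\mathcal{I}_{m+n},\psi)\in\texttt{hyco}^{m,n}$, then for all $\tau_1\in\mathit{Traces}(\mathcal{I}_1),\ldots,\tau_m\in\mathit{Traces}(\mathcal{I}_m)$ there exist $\tau_{m+1}\in\mathit{Traces}(\mathcal{I}_{m+1}),\ldots,\tau_{m+n}\in\mathit{Traces}(\mathcal{I}_{m+n})$ with $(\tau_1,\ldots,\tau_{m+n})\in\psi$.
   Context: LTS $(\mathcal{S},\mathcal{E},\mathcal{I},\to)$: states, observable events, initial state, and $\to\subseteq\mathcal{S}\times(\mathcal{E}\cup\{\emptyset\})\times\mathcal{S}$, label $\emptyset$ marking silent steps. $\to^*$ is the reflexive transitive closure of silent steps; for $e\in\mathcal{E}$, $s\overset{e}{\rightsquigarrow}s'$ means $s\to^*s''\xrightarrow{e}s'$ for some $s''$. $\mathit{Traces}(s)$ is the set of $\tau\in\mathcal{E}^\omega$ such that some $\pi\in\mathcal{S}^\omega$ has $\pi_0=s$ and $\pi_i\overset{\tau[i]}{\rightsquigarrow}\pi_{i+1}$ for all $i$. For a $k$-ary trace relation $\psi$, its safety closure is $|\psi|_{\mathit{safe}}=\{(\tau_1,\ldots,\tau_k)\mid\forall n.\exists\tau_1',\ldots,\tau_k'.(\tau_1[0..n)\tau_1',\ldots,\tau_k[0..n)\tau_k')\in\psi\}$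 ($\tau[0..n)$ the prefix of length $n$), and $\psi$ is a safety relation iff $|\psi|_{\mathit{safe}}\subseteq\psi$. Derivative: $\Delta_{e_1,\ldots,e_k}(\psi)=\{(\tau_1,\ldots,\tau_k)\mid(e_1\tau_1,\ldots,e_k\tau_k)\in\psi\}$. $\texttt{hyco}^{m,n}\subseteq\mathcal{S}_1\times\cdots\times\mathcal{S}_{m+n}\times\mathcal{P}(\mathcal{E}_1^\omega\times\cdots\times\mathcal{E}_{m+n}^\omega)$ is the greatest fixed point of the monotone operator $\texttt{hycoF}^{m,n}(R)=\{(s_1,\ldots,s_{m+n},\psi)\mid\forall s_1\overset{e_1}{\rightsquigarrow}s_1'\ldots\forall s_m\overset{e_m}{\rightsquigarrow}s_m',\ \exists s_{m+1}\overset{e_{m+1}}{\rightsquigarrow}s_{m+1}'\ldots\exists s_{m+n}\overset{e_{m+n}}{\rightsquigarrow}s_{m+n}',\ \Delta_{e_1,\ldots,e_{m+n}}(\psi)\neq\emptyset\wedge(s_1',\ldots,s_{m+n}',\Delta_{e_1,\ldots,e_{m+n}}(\psi))\in R\}$ (each transition in system $i$ is in $\mathit{TS}_i$). *)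

(* Defs.v *)
From mathcomp Require Import all_boot.
From Stdlib Require Import Relations.

Set Implicit Arguments.
Unset Strict Implicit.
Unset Printing Implicit Defensive.

(* A labelled transition system (S, E, I, ->); silent steps carry label None. *)
Record LTS := {
  St : Type;
  Ev : Type;
  init : St;
  step : St -> option Ev -> St -> Prop
}.

Definition silent_star (L : LTS) : St L -> St L -> Prop :=
  clos_refl_trans (St L) (fun s s' => step s None s').

Definition wstep (L : LTS) (s : St L) (e : Ev L) (s' : St L) : Prop :=
  exists s'', silent_star s s'' /\ step s'' (Some e) s'.

Definition Traces (L : LTS) (s : St L) (tau : nat -> Ev L) : Prop :=
  exists pi : nat -> St L, pi 0 = s /\ forall i, wstep (pi i) (tau i) (pi i.+1).

Definition ttuple k (TS : 'I_k -> LTS) := forall i : 'I_k, nat -> Ev (TS i).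
Definition trel k (TS : 'I_k -> LTS) := ttuple TS -> Prop.

Definition prefix_cat (E : Type) (n : nat) (tau tau' : nat -> E) : nat -> E :=
  fun j => if j < n then tau j else tau' (j - n).

Definition safe_closure k (TS : 'I_k -> LTS) (psi : trel TS) : trel TS :=
  fun tau => forall n, exists tau' : ttuple TS,
      psi (fun i => prefix_cat n (tau i) (tau' i)).

Definition safety_rel k (TS : 'I_k -> LTS) (psi : trel TS) : Prop :=
  forall tau, safe_closure psi tau -> psi tau.

Definition scons (E : Type) (e : E) (tau : nat -> E) : nat -> E :=
  fun j => match j with 0 => e | j'.+1 => tau j' end.

Definition deriv k (TS : 'I_k -> LTS) (e : forall i, Ev (TS i)) (psi : trel TS)
  : trel TS := fun tau => psi (fun i => scons (e i) (tau i)).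

Definition rel_nonempty k (TS : 'I_k -> LTS) (psi : trel TS) : Prop :=
  exists tau, psi tau.

Definition join (m n : nat) (F : 'I_(m + n) -> Type)
  (a : forall i : 'I_m, F (lshift n i)) (b : forall j : 'I_n, F (rshift m j))
  : forall i : 'I_(m + n), F i :=
  fun i => eq_rect _ F
    (match split i as u return F (unsplit u) with
     | inl k => a k
     | inr k => b k
     end) i (splitK i).

Definition hycoF (m n : nat) (TS : 'I_(m + n) -> LTS)
  (R : (forall i, St (TS i)) -> trel TS -> Prop)
  (s : forall i, St (TS i)) (psi : trel TS) : Prop :=
  forall (ea : forall i : 'I_m, Ev (TS (lshift n i)))
         (sa : forall i : 'I_m, St (TS (lshift n i))),
    (forall i, wstep (s (lshift n i)) (ea i) (sa i)) ->
    exists (eb : forall j : 'I_n, Ev (TS (rshift m j)))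
           (sb : forall j : 'I_n, St (TS (rshift m j))),
      (forall j, wstep (s (rshift m j)) (eb j) (sb j)) /\
      rel_nonempty (deriv (join ea eb) psi) /\
      R (join sa sb) (deriv (join ea eb) psi).

(* hyco^{m,n}: greatest fixed point of hycoF^{m,n}, i.e. (Knaster–Tarski)
   the union of all post-fixed points R ⊆ hycoF^{m,n}(R). *)
Definition hyco (m n : nat) (TS : 'I_(m + n) -> LTS)
  (s : forall i, St (TS i)) (psi : trel TS) : Prop :=
  exists R : (forall i, St (TS i)) -> trel TS -> Prop,
    (forall s' psi', R s' psi' -> hycoF R s' psi') /\ R s psi.

(* Main.v *)
Require Import Defs.
From mathcomp Require Import all_boot.
From Stdlib Require Import ClassicalEpsilon FunctionalExtensionality.

Lemma join_map m n (F F' : 'I_(m+n) -> Type) (G : forall i, F i -> F' i) a b i :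
  G i (join (F:=F) a b i) = join (F:=F') (fun k => G _ (a k)) (fun k => G _ (b k)) i.
Proof.
rewrite /join. move: (splitK i). case: (split i) => k e; subst i => //.
Qed.

Lemma join_f m n (F : 'I_(m+n) -> Type) (f : forall i, F i) i :
  join (F:=F) (fun k => f (lshift n k)) (fun k => f (rshift m k)) i = f i.
Proof.
rewrite /join. move: (splitK i). case: (split i) => k e; subst i => //.
Qed.

Lemma join_l m n (F : 'I_(m+n) -> Type) a b k :
  join (F:=F) a b (lshift n k) = a k.
Proof.
rewrite /join. move: (splitK (lshift n k)). have : split (lshift n k) = inl k := @unsplitK m n (inl k).
case: (split (lshift n k)) => // u [<-] e.
by rewrite (eq_irrelevance e erefl).
Qed.
Lemma join_r m n (F : 'I_(m+n) -> Type) a b k :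
  join (F:=F) a b (rshift m k) = b k.
Proof.
rewrite /join. move: (splitK (rshift m k)). have : split (rshift m k) = inr k := @unsplitK m n (inr k).
case: (split (rshift m k)) => // u [<-] e.
by rewrite (eq_irrelevance e erefl).
Qed.

Lemma psi_ext k (TS : 'I_k -> LTS) (psi : trel TS) (f g : ttuple TS) :
  psi f -> (forall i j, f i j = g i j) -> psi g.
Proof.
move=> Hf H.
have -> : g = f; last exact Hf.
apply: functional_extensionality_dep => i; apply: functional_extensionality => j.
by rewrite H.
Qed.

Theorem mainTheorem6 (m n : nat) (TS : 'I_(m + n) -> LTS) (psi : trel TS) :
  safety_rel psi ->
  @hyco m n TS (fun i => init (TS i)) psi ->
  forall ta : forall i : 'I_m, nat -> Ev (TS (lshift n i)),
    (forall i, Traces (init (TS (lshift n i))) (ta i)) ->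
    exists tb : forall j : 'I_n, nat -> Ev (TS (rshift m j)),
      (forall j, Traces (init (TS (rshift m j))) (tb j)) /\
      psi (join (F := fun i => nat -> Ev (TS i)) ta tb).
Proof.
move=> Hsafe [R [HR HR0]] ta Hta.
have Hpa : forall i, {p : nat -> St (TS (lshift n i)) |
   p 0 = init _ /\ forall k, wstep (p k) (ta i k) (p k.+1)}.
  move=> i; apply: constructive_indefinite_description.
  by case: (Hta i) => p [H0 H1]; exists p.
pose pa i := sval (Hpa i).
have pa0 : forall i, pa i 0 = init _ by move=> i; rewrite /pa; case: (Hpa i) => p [].
have paS : forall i k, wstep (pa i k) (ta i k) (pa i k.+1)
  by move=> i; rewrite /pa; case: (Hpa i) => p [].
pose X k := {sb : forall j, St (TS (rshift m j)) &
   {phi : trel TS | R (join (F := fun i => St (TS i)) (fun i => pa i k) sb) phi}}.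
have step : forall k (x : X k), {p : (forall j, Ev (TS (rshift m j))) * X k.+1 |
   (forall j, wstep (projT1 x j) (p.1 j) (projT1 p.2 j)) /\
   rel_nonempty (deriv (join (F := fun i => Ev (TS i)) (fun i => ta i k) p.1)
                   (sval (projT2 x))) /\
   sval (projT2 p.2) = deriv (join (F := fun i => Ev (TS i)) (fun i => ta i k) p.1)
                   (sval (projT2 x))}.
  move=> k [sb [phi Hr]]; apply: constructive_indefinite_description.
  have [eb [sb' [Hw [Hne HR']]]] := HR _ _ Hr (fun i => ta i k) (fun i => pa i k.+1)
     (fun i => ltac:(rewrite join_l; exact: paS)).
  exists (eb, existT _ sb' (exist _ _ HR')) => /=; split => //.
  by move=> j; have := Hw j; rewrite join_r.
have H0 : R (join (F := fun i => St (TS i)) (fun i => pa i 0)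
            (fun j => init (TS (rshift m j)))) psi.
  have -> : join (F := fun i => St (TS i)) (fun i => pa i 0)
            (fun j => init (TS (rshift m j))) = fun i => init (TS i).
    apply: functional_extensionality_dep => i.
    have -> : (fun i => pa i 0) = (fun i => init (TS (lshift n i))).
      by apply: functional_extensionality_dep => i'; rewrite pa0.
    exact: (@join_f m n (fun i => St (TS i)) (fun i => init (TS i))).
  exact HR0.
pose x0 : X 0 := existT _ (fun j => init (TS (rshift m j))) (exist _ psi H0).
pose st := fix st k : X k := match k with 0 => x0 | k'.+1 => (sval (step k' (st k'))).2 end.
pose eb k := (sval (step k (st k))).1.
pose phi k := sval (projT2 (st k)).
have Hst : forall k, (forall j, wstep (projT1 (st k) j) (eb k j) (projT1 (st k.+1) j)) /\
   rel_nonempty (deriv (join (F := fun i => Ev (TS i)) (fun i => ta i k) (eb k)) (phi k)) /\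
   phi k.+1 = deriv (join (F := fun i => Ev (TS i)) (fun i => ta i k) (eb k)) (phi k).
  by move=> k; rewrite /eb /phi /=; case: (step k (st k)).
pose tb j k := eb k j.
exists tb; split.
  move=> j; exists (fun k => projT1 (st k) j); split => // k.
  exact: (proj1 (Hst k)).
pose comb := join (F := fun i => nat -> Ev (TS i)) ta tb.
have Hcomb : forall i k, comb i k =
    join (F := fun i => Ev (TS i)) (fun i => ta i k) (eb k) i.
  move=> i k; exact: (@join_map m n (fun i => nat -> Ev (TS i))
      (fun i => Ev (TS i)) (fun i f => f k)).
have Hind : forall N tau, phi N tau -> psi (fun i => prefix_cat N (comb i) (tau i)).
  elim=> [|N IH] tau Hp.
    change (psi tau) in Hp; apply: (@psi_ext _ TS psi _ _ Hp) => i j; by rewrite /prefix_cat /= subn0.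
  have := (proj2 (proj2 (Hst N))); rewrite -/(phi N.+1) => E.
  rewrite E /deriv in Hp.
  apply: (@psi_ext _ TS psi _ _ (IH _ Hp)) => i j; rewrite /prefix_cat /scons.
  case: (ltngtP j N) => [h|h|->].
  - by rewrite ltnS (ltnW h).
  - by rewrite ltnNge h /= -(subnSK h).
  - by rewrite subnn ltnSn Hcomb.
apply: Hsafe => N.
have [tau' Ht] := proj1 (proj2 (Hst N)).
rewrite -(proj2 (proj2 (Hst N))) in Ht.
have Hp := Hind _ _ Ht.
exists (fun i j => prefix_cat N.+1 (comb i) (tau' i) (j + N)).
apply: (@psi_ext _ TS psi _ _ Hp) => i j; rewrite /prefix_cat.
case: (ltnP j N) => h.
- by rewrite ltnS ltnW.
- by rewrite subnK.
Qed.
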